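(* For the $2$-state GM+I model on binary 4-taxon trees (the three trees $T_{ab|cd}$, $T_{ac|bd}$, $T_{ad|bc}$ on taxa $a,b,c,d$), the tree parameter is generically identifiable.
   Context: For a binary $n$-taxon tree $T$ (leaves labeled by the taxa, internal vertices of valence 3) with edge set $E$, the $\kappa$-state GM+I model has parameters $\mathbf s=(\delta,\pi_I,\pi_{GM},(M_e)_{e\in E})$: $\delta\in[0,1]$, probability vectors $\pi_I,\pi_{GM}\in[0,1]^\kappa$ ($\pi_{GM}$ the distribution at a chosen root $r$), and $\kappa\times\kappa$ Markov matrices $M_e$ for edges $e$ directed away from $r$. These form a stochastic parameter space $S_T\subseteq\mathbb R^N$, $N=2\kappa-1+|E|\kappa(\kappa-1)$. The joint leaf distribution $P=\phi_T(\mathbf s)$ has entries $p_{i_1\dots i_n}=\delta\,\epsilon(i_1,\dots,i_n)\pi_I(i_1)+(1-\delta)\sum_{(j_v)}\pi_{GM}(j_r)\prod_{e=(u\to w)}M_e(j_u,j_w)$, with $\epsilon=1$ if all indices equal and $0$ otherwise, the sum over all state assignments to vertices extending the leaf states. The tree parameter is generically identifiable for a collection of trees if for each tree $T$ there is a proper algebraic variety $X_T\subsetneq\mathbb C^N$ such that whenever $P\in\bigcup_T\phi_T(S_T\setminus X_T)$, there is a unique tree $T$ with $P\in\phi_T(S_T\setminus X_T)$. *)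

(* Defs.v *)
From mathcomp Require Import all_boot all_order all_algebra.
From mathcomp Require Import reals.
From mathcomp Require Import complex.
From mathcomp Require Import mpoly.

Set Implicit Arguments.
Unset Strict Implicit.
Unset Printing Implicit Defensive.

Import GRing.Theory Num.Theory.
Local Open Scope ring_scope.

(* Number of edges |E| = 5, so N = 2*2-1 + 5*2*(2-1) = 13.             *)

Inductive quartet := T_ab_cd | T_ac_bd | T_ad_bc.

Definition Npar : nat := 13.

Definition param (R : Type) := 'I_Npar -> R.

(* Coordinate conventions:
     s 0            = delta
     s 1            = pi_I(0)        (pi_I(1)  = 1 - s 1)
     s 2            = pi_GM(0)       (pi_GM(1) = 1 - s 2)
     s (3 + 2e + i) = M_e(i,0)       (M_e(i,1) = 1 - s(3+2e+i)),  e < 5, i < 2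
   Each tree has two internal vertices u (the root r) and v; the edges are
     e = 0 : u -> first leaf of the cherry at u
     e = 1 : u -> second leaf of the cherry at u
     e = 2 : u -> v
     e = 3 : v -> first leaf of the cherry at v
     e = 4 : v -> second leaf of the cherry at v. *)
Section Model.
Variable R : realType.
Implicit Types (s : param R).

Definition coord s (k : nat) : R := s (inord k).

Definition delta s : R := coord s 0.

Definition piI s (i : 'I_2) : R :=
  if i == 0 :> nat then coord s 1 else 1 - coord s 1.

Definition piGM s (i : 'I_2) : R :=
  if i == 0 :> nat then coord s 2 else 1 - coord s 2.

Definition Medge s (e : 'I_5) (i j : 'I_2) : R :=
  let x := coord s (3 + 2 * e + i) in
  if j == 0 :> nat then x else 1 - x.

Definition in01 (x : R) := 0 <= x <= 1.

Definition stochastic s : Prop :=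
  [/\ in01 (delta s),
      (forall i, in01 (piI s i)),
      (forall i, in01 (piGM s i)) &
      (forall e i j, in01 (Medge s e i j))].

Definition gm_quartet s (x1 x2 x3 x4 : 'I_2) : R :=
  \sum_(ju < 2) \sum_(jv < 2)
     piGM s ju * Medge s 0 ju x1 * Medge s 1 ju x2 * Medge s 2 ju jv
       * Medge s 3 jv x3 * Medge s 4 jv x4.

Definition eps4 (ia ib ic id : 'I_2) : R :=
  if [&& ia == ib, ib == ic & ic == id] then 1 else 0.

(* Joint leaf distribution, as a function of the states at a, b, c, d. *)
Definition leafdist := 'I_2 -> 'I_2 -> 'I_2 -> 'I_2 -> R.

Definition phi (T : quartet) s : leafdist :=
  fun ia ib ic id =>
    delta s * eps4 ia ib ic id * piI s ia
    + (1 - delta s) *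
      match T with
      | T_ab_cd => gm_quartet s ia ib ic id
      | T_ac_bd => gm_quartet s ia ic ib id
      | T_ad_bc => gm_quartet s ia id ib ic
      end.

End Model.

Definition in_variety (R : realType) (F : seq {mpoly R[i][Npar]})
  (z : 'I_Npar -> R[i]) : Prop :=
  forall f, f \in F -> f.@[z] = 0.

Definition proper_variety (R : realType) (F : seq {mpoly R[i][Npar]}) : Prop :=
  exists z : 'I_Npar -> R[i], ~ in_variety F z.

Definition realC (R : realType) (s : param R) : 'I_Npar -> R[i] :=
  fun k => Complex (s k) 0.

Definition in_generic_image (R : realType) (X : quartet -> seq {mpoly R[i][Npar]})
  (T : quartet) (P : leafdist R) : Prop :=
  exists s : param R,
    [/\ stochastic s, ~ in_variety (X T) (realC s) & P = phi T s].

(* Main.v *)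
Require Import Defs.
From mathcomp Require Import all_boot all_order all_algebra.
From mathcomp Require Import reals complex mpoly.
From mathcomp Require Import ring.
From Stdlib Require Import FunctionalExtensionality.

Set Implicit Arguments.
Unset Strict Implicit.
Unset Printing Implicit Defensive.
Import GRing.Theory Num.Theory.
Local Open Scope ring_scope.

Lemma big_ord2 (A : nmodType) (F : 'I_2 -> A) :
  \sum_(i < 2) F i = F ord0 + F ord_max.
Proof. rewrite big_ord_recl big_ord1; congr (_ + F _); exact: val_inj. Qed.

Section Generic.
Variable A : comNzRingType.
Implicit Types (x : nat -> A).

Definition dG x : A := x 0%N.
Definition pIG x (i : 'I_2) : A := if i == 0 :> nat then x 1%N else 1 - x 1%N.
Definition pGG x (i : 'I_2) : A := if i == 0 :> nat then x 2%N else 1 - x 2%N.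
Definition MG x (e : 'I_5) (i j : 'I_2) : A :=
  let y := x (3 + 2 * e + i)%N in if j == 0 :> nat then y else 1 - y.
Definition gmG x (x1 x2 x3 x4 : 'I_2) : A :=
  \sum_(ju < 2) \sum_(jv < 2)
     pGG x ju * MG x 0 ju x1 * MG x 1 ju x2 * MG x 2 ju jv
       * MG x 3 jv x3 * MG x 4 jv x4.
Definition eps4G (ia ib ic id : 'I_2) : A :=
  if [&& ia == ib, ib == ic & ic == id] then 1 else 0.
Definition phiG x (T : quartet) (ia ib ic id : 'I_2) : A :=
    dG x * eps4G ia ib ic id * pIG x ia
    + (1 - dG x) *
      match T with
      | T_ab_cd => gmG x ia ib ic id
      | T_ac_bd => gmG x ia ic ib id
      | T_ad_bc => gmG x ia id ib ic
      end.

Definition o0 : 'I_2 := ord0.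
Definition o1 : 'I_2 := ord_max.
Definition rA (k : nat) : 'I_2 := if k == 0%N then o0 else o1.
Definition rB (k : nat) : 'I_2 := if k == 1%N then o0 else o1.
Definition cA (k : nat) : 'I_2 := if k == 2%N then o1 else o0.
Definition cB (k : nat) : 'I_2 := if k == 1%N then o1 else o0.

Definition det3 (m : nat -> nat -> A) : A :=
  m 0%N 0%N * (m 1%N 1%N * m 2%N 2%N - m 1%N 2%N * m 2%N 1%N)
  - m 0%N 1%N * (m 1%N 0%N * m 2%N 2%N - m 1%N 2%N * m 2%N 0%N)
  + m 0%N 2%N * (m 1%N 0%N * m 2%N 1%N - m 1%N 1%N * m 2%N 0%N).

Definition entS (S : quartet) (P : 'I_2 -> 'I_2 -> 'I_2 -> 'I_2 -> A)
  (r1 r2 c1 c2 : 'I_2) : A :=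
  match S with
  | T_ab_cd => P r1 r2 c1 c2
  | T_ac_bd => P r1 c1 r2 c2
  | T_ad_bc => P r1 c1 c2 r2
  end.

Definition minS S P : A :=
  det3 (fun i j => entS S P (rA i) (rB i) (cA j) (cB j)).

Definition W (T : quartet) P : A :=
  match T with
  | T_ab_cd => minS T_ac_bd P * minS T_ad_bc P
  | T_ac_bd => minS T_ab_cd P * minS T_ad_bc P
  | T_ad_bc => minS T_ab_cd P * minS T_ac_bd P
  end.

Lemma det3_rank2 (m : nat -> nat -> A) c (g : nat -> 'I_2 -> A)
  (h : 'I_2 -> nat -> A) :
  (forall i j, (i < 3)%N -> (j < 3)%N ->
     m i j = c * (g i o0 * h o0 j + g i o1 * h o1 j)) -> det3 m = 0.
Proof. move=> H; rewrite /det3 !H //; ring. Qed.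

Definition Gf x (a b k : 'I_2) : A :=
  \sum_(ju < 2) pGG x ju * MG x 0 ju a * MG x 1 ju b * MG x 2 ju k.
Definition Hf x (k c d : 'I_2) : A := MG x 3 k c * MG x 4 k d.

Lemma gm_split x a b c d :
  gmG x a b c d = Gf x a b o0 * Hf x o0 c d + Gf x a b o1 * Hf x o1 c d.
Proof.
rewrite /gmG /Gf /Hf !big_ord2 /o0 /o1.
ring.
Qed.

Lemma entS_phi x T (r1 r2 c1 c2 : 'I_2) :
  (r1 == o1) || (r2 == o1) -> (c1 == o0) || (c2 == o0) ->
  entS T (phiG x T) r1 r2 c1 c2 = (1 - dG x) * gmG x r1 r2 c1 c2.
Proof.
have I2 (i : 'I_2) : i = o0 \/ i = o1.
  case: i => [[|[|k]] Hk]; [left|right|by []]; exact: val_inj.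
case: (I2 r1) => ->; case: (I2 r2) => ->; case: (I2 c1)=> ->; case: (I2 c2) => -> //= _ _;
  case: T; rewrite /entS /phiG /eps4G /=; by rewrite mulr0 mul0r add0r.
Qed.

Lemma minS_vanish x T : minS T (phiG x T) = 0.
Proof.
rewrite /minS.
apply: (@det3_rank2 _ (1 - dG x) (fun i k => Gf x (rA i) (rB i) k)
          (fun k j => Hf x k (cA j) (cB j))) => i j Hi Hj.
rewrite entS_phi ?gm_split //.
- by move: Hi; rewrite /rA /rB; case: i => [|[|[|]]] //.
- by move: Hj; rewrite /cA /cB; case: j => [|[|[|]]] //.
Qed.

End Generic.

Section Morph.
Variables (A B : comNzRingType) (f : {rmorphism A -> B}).

Lemma minS_morph S (P : 'I_2 -> 'I_2 -> 'I_2 -> 'I_2 -> A) :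
  f (minS S P) = minS S (fun a b c d => f (P a b c d)).
Proof. by case: S; rewrite /minS /det3 /entS !(rmorphB, rmorphM, rmorphD). Qed.

Lemma W_morph T (P : 'I_2 -> 'I_2 -> 'I_2 -> 'I_2 -> A) :
  f (W T P) = W T (fun a b c d => f (P a b c d)).
Proof. by case: T; rewrite /W rmorphM !minS_morph. Qed.

Lemma phiG_morph x T a b c d :
  f (phiG x T a b c d) = phiG (fun k => f (x k)) T a b c d.
Proof.
have pI i : f (pIG x i) = pIG (fun k => f (x k)) i.
  by rewrite /pIG; case: ifP; rewrite ?rmorphB ?rmorph1.
have pG i : f (pGG x i) = pGG (fun k => f (x k)) i.
  by rewrite /pGG; case: ifP; rewrite ?rmorphB ?rmorph1.
have MM e i j : f (MG x e i j) = MG (fun k => f (x k)) e i j.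
  by rewrite /MG; case: ifP; rewrite ?rmorphB ?rmorph1.
have gm a1 a2 a3 a4 : f (gmG x a1 a2 a3 a4) = gmG (fun k => f (x k)) a1 a2 a3 a4.
  rewrite /gmG rmorph_sum; apply: eq_bigr => ju _.
  rewrite rmorph_sum; apply: eq_bigr => jv _.
  by rewrite !rmorphM pG !MM.
have ep a1 a2 a3 a4 : f (eps4G A a1 a2 a3 a4) = eps4G B a1 a2 a3 a4.
  by rewrite /eps4G; case: ifP; rewrite ?rmorph1 ?rmorph0.
rewrite /phiG rmorphD !rmorphM rmorphB rmorph1 pI ep.
by case: T; rewrite gm.
Qed.

Lemma W_phi_morph T x :
  f (W T (phiG x T)) = W T (phiG (fun k => f (x k)) T).
Proof.
rewrite W_morph.
have -> : (fun a b c d => f (phiG x T a b c d)) = phiG (fun k => f (x k)) T.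
  do 4 (apply: functional_extensionality => ?).
  by rewrite phiG_morph.
by [].
Qed.

End Morph.

Definition v0 (k : nat) : int :=
  nth 0 [:: 0; 0; -1; 2; 1; 1; 0; 2; 2; 2; 1; 1; 0] k.

Lemma v0_inord : (fun k => v0 (@inord 12 k)) = v0.
Proof.
apply: functional_extensionality => k.
case: (ltnP k 13) => H; first by rewrite inordK.
rewrite /inord /insubd insubN /=; last by rewrite -ltnNge.
by rewrite /v0 [RHS]nth_default.
Qed.

Lemma W_int_ne0 T : W T (phiG v0 T) != 0.
Proof.
by case: T; rewrite /W /minS /det3 /entS /phiG /gmG !big_ord2; vm_compute.
Qed.

Theorem corollary7 (R : realType) :
  exists X : quartet -> seq {mpoly R[i][Npar]},
    (forall T, proper_variety (X T)) /\
    (forall P : leafdist R,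
        (exists T, in_generic_image X T P) ->
        exists! T, in_generic_image X T P).
Proof.
pose Xs : nat -> {mpoly R[i][Npar]} := fun k => 'X_(@inord 12 k).
exists (fun T => [:: W T (phiG Xs T)]).
have ev : forall T z, (W T (phiG Xs T)).@[z]
    = W T (phiG (fun k => z (@inord 12 k)) T).
  move=> T z; rewrite (W_phi_morph (meval z)); congr (W T (phiG _ T)).
  apply: functional_extensionality => k; rewrite /Xs /=. exact: mevalXU.
have phiE : forall T (s : param R), phi T s = phiG (fun k => s (@inord 12 k)) T.
  by [].
have evR : forall T s, (W T (phiG Xs T)).@[realC s] = real_complex R (W T (phi T s)).
  move=> T s; rewrite ev phiE (W_phi_morph (real_complex R)).
  by [].
split.
- move=> T; exists (realC (fun k : 'I_Npar => (v0 k)%:~R)) => H.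
  have := H _ (mem_head _ _); rewrite evR phiE.
  change (fun k => (v0 (@inord 12 k))%:~R : R) with
    (fun k => intmul (1 : R) ((fun k => v0 (@inord 12 k)) k)).
  rewrite v0_inord -(W_phi_morph (intmul (1 : R))) => E.
  have := W_int_ne0 T; rewrite -(intr_eq0 R); apply/negP; rewrite negbK.
  apply/eqP; apply: complexI; rewrite E; exact: (rmorph0 (real_complex R)).
- move=> P [T [s [st nv eP]]]; exists T; split; first by exists s.
  move=> T' [s' [_ _ eP']].
  have Wne : W T P != 0.
    apply/eqP=> W0; apply: nv => f; rewrite inE => /eqP ->.
    by rewrite evR -eP W0 rmorph0.
  have M0 : minS T' P = 0 by rewrite eP' phiE minS_vanish.
  move: Wne M0; clear nv eP eP' st; case: T; case: T' => //= /[swap] ->; by rewrite ?mul0r ?mulr0 eqxx.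
Qed.
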